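(* Let $K\ge 1$ and $N$ be integers with $N-K\ge K$, and let $\mu>0$. Consider $K$ files stored on $N$ nodes using a systematic $(N,K)$ MDS code, each node having service rate $\mu$. Then the water-filling algorithm is optimal: the set of arrival-rate vectors $(\lambda_1,\dots,\lambda_K)\in\mathbb{R}_{\ge 0}^K$ that it can serve is the whole region $$\Big\{(\lambda_1,\dots,\lambda_K)\in\mathbb{R}_{\ge0}^K:\ \sum_{i=1}^{K}\Big(\min(\lambda_i,\mu)+K(\lambda_i-\mu)^{+}\Big)\le N\mu\Big\},$$ where $(x)^+=\max(0,x)$; in particular this region is the service capacity region of the system.
   Context: Storage model: there are $K$ files $f_1,\dots,f_K$ of equal size stored on $N$ nodes labeled $1,\dots,N$, each node having service rate $\mu$. In the systematic $(N,K)$ MDS code, node $i$ stores $f_i$ for $1\le i\le K$, and nodes $K+1,\dots,N$ store parity symbols, such that $f_i$ can be recovered either from node $i$ alone or from any $K$ of the other $N-1$ nodes; the recovering sets of $f_i$ are $\{i\}$ and every $K$-element subset of $\{1,\dots,N\}\setminus\{i\}$, denoted $R^{(i)}_1,\dots,R^{(i)}_{t_i}$. Requests for $f_i$ arrive at rate $\lambda_i\ge0$. The service capacity region is the set of vectors $(\lambda_1,\dots,\lambda_K)$ for which there exist $\lambda^{(i)}_j\ge 0$ (rate of requests for $f_i$ sent to $R^{(i)}_j$) with $\sum_j\lambda^{(i)}_j=\lambda_i$ for all $i$ and $\sum_{i}\sum_{j:\,\ell\in R^{(i)}_j}\lambda^{(i)}_j\le\mu$ for every node $\ell$. Water-filling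 algorithm: given $\lambda_1,\dots,\lambda_K$, let $\gamma_\ell$ denote the load on node $\ell$. First set $\gamma_i=\min(\lambda_i,\mu)$ for $i=1,\dots,K$ (requests are sent to their systematic node until it is saturated) and $\gamma_\ell=0$ for $\ell>K$. The remaining rate $\lambda_{\mathrm{coded}}=\sum_{i=1}^K(\lambda_i-\mu)^+$ is served through coded recovery, each unit of it occupying $K$ unsaturated nodes (a request for $f_i$ with $\lambda_i>\mu$ never uses node $i$, which is saturated). While $\lambda_{\mathrm{coded}}>0$ and $\min_\ell\gamma_\ell<\mu$: choose the $K$ least-loaded nodes, send an infinitesimal rate $\epsilon>0$ to each of them, decrease $\lambda_{\mathrm{coded}}$ by $\epsilon$ and increase these $K$ loads by $\epsilon$. The algorithm serves $(\lambda_1,\dots,\lambda_K)$ if it ends with $\lambda_{\mathrm{coded}}=0$ and all loads at most $\mu$. *)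

(* Defs.v *)
From HB Require Import structures.
From mathcomp Require Import all_boot all_order all_algebra.
From mathcomp Require Import reals.
Import Order.TTheory GRing.Theory Num.Theory.
Local Open Scope ring_scope.

(* Nodes are 'I_N, files are 'I_K; file i is stored systematically on the node
   whose index equals i (nodes 0..K-1 in 0-based indexing). *)

Definition posp {R : realType} (x : R) : R := Num.max 0 x.

Definition recovering (K N : nat) (i : 'I_K) (S : {set 'I_N}) : bool :=
  (S == [set j : 'I_N | val j == val i])
  || ((#|S| == K) && [forall j in S, val j != val i]).

Definition in_capacity_region {R : realType} (K N : nat) (mu : R)
    (lam : 'I_K -> R) : Prop :=
  exists x : 'I_K -> {set 'I_N} -> R,
    (forall i S, 0 <= x i S) /\
    (forall i, \sum_(S : {set 'I_N} | recovering K N i S) x i S = lam i) /\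
    (forall l : 'I_N,
       \sum_(i < K) \sum_(S : {set 'I_N} | recovering K N i S && (l \in S)) x i S
         <= mu).

Definition in_region {R : realType} (K N : nat) (mu : R) (lam : 'I_K -> R) : Prop :=
  \sum_(i < K) (Num.min (lam i) mu + K%:R * posp (lam i - mu)) <= N%:R * mu.

Definition wf_init {R : realType} (K N : nat) (mu : R) (lam : 'I_K -> R)
    (l : 'I_N) : R :=
  \sum_(i < K | val i == val l) Num.min (lam i) mu.

Definition wf_coded {R : realType} (K : nat) (mu : R) (lam : 'I_K -> R) : R :=
  \sum_(i < K) posp (lam i - mu).

(* Fluid (epsilon -> 0) model of the water-filling loop: g t l is the load of
   node l after coded rate t has been allocated, 0 <= t <= T.  Each unit of
   coded rate occupies K distinct nodes (so each node's load grows at rate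
   between 0 and 1, and total load at rate K), and it is always sent to the
   K least-loaded nodes: if on a time interval node l stays strictly less
   loaded than node m and m receives some rate, then l receives full rate. *)
Definition wf_trajectory {R : realType} (K N : nat) (init : 'I_N -> R) (T : R)
    (g : R -> 'I_N -> R) : Prop :=
  (forall l, g 0 l = init l) /\
  (forall s t l, 0 <= s -> s <= t -> t <= T ->
     0 <= g t l - g s l <= t - s) /\
  (forall s t, 0 <= s -> s <= t -> t <= T ->
     \sum_(l : 'I_N) (g t l - g s l) = K%:R * (t - s)) /\
  (forall s t (l m : 'I_N), 0 <= s -> s <= t -> t <= T ->
     (forall u, s <= u -> u <= t -> g u l < g u m) ->
     g s m < g t m -> g t l - g s l = t - s).

(* The water-filling algorithm serves lam: it runs (a fluid run exists), and
   every run ends with all loads at most mu (all the coded rate is served,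
   since a run allocates the whole coded rate T). *)
Definition wf_serves {R : realType} (K N : nat) (mu : R) (lam : 'I_K -> R) : Prop :=
  (exists g, wf_trajectory K N (wf_init K N mu lam) (wf_coded K mu lam) g) /\
  (forall g, wf_trajectory K N (wf_init K N mu lam) (wf_coded K mu lam) g ->
     forall l : 'I_N, g (wf_coded K mu lam) l <= mu).

(* Main.v *)
Require Import Defs.
From HB Require Import structures.
From mathcomp Require Import boolp classical_sets.
From mathcomp Require Import all_boot all_order all_algebra.
From mathcomp Require Import reals.
From mathcomp Require Import ring lra.
Import Order.TTheory GRing.Theory Num.Theory.
Local Open Scope ring_scope.

Ltac splitmm := repeat match goal with
 | |- context[Num.min ?x ?y] => case: (leP x y) => ?
 | |- context[Num.max ?x ?y] => case: (leP x y) => ? end.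

Section InfH.
Variable R : realType.
Variable E : set R.
Hypothesis Ene : exists u, E u.
Hypothesis Ege0 : forall u, E u -> 0 <= u.
Lemma hasinfE : has_inf E.
Proof. split; first by case: Ene => u Eu; exists u. by exists 0 => u /Ege0. Qed.
Lemma infE_lb u : E u -> inf E <= u.
Proof. by move=> Eu; apply: (ge_inf (proj2 hasinfE)). Qed.
Lemma infE_ge0 : 0 <= inf E.
Proof. apply: lb_le_inf; first by case: Ene => u Eu; exists u. by move=> u /Ege0. Qed.
Lemma infE_adh e : 0 < e -> exists2 u, E u & u < inf E + e.
Proof. by move=> e0; apply: inf_adherent => //; exact: hasinfE. Qed.
End InfH.

Lemma le_eps (R : realType) (x y c : R) : 0 < c ->
  (forall e, 0 < e -> y <= x + c * e) -> y <= x.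
Proof.
move=> c0 H; apply/ler_addgt0Pr => e e0.
have := H (e / c) (divr_gt0 e0 c0).
by rewrite mulrC divfK // gt_eqF.
Qed.

Section T.
Variable R : realType.
Definition cl (h a t : R) := Num.max a (Num.min (a + t) h).

Lemma cl_conc (h a s t : R) : 0 <= s -> s <= t -> 0 <= a -> 0 <= h ->
  (t - s) * a + s * cl h a t <= t * cl h a s.
Proof. move=> *; rewrite /cl; splitmm; nra. Qed.
Lemma cl_shift (h s d : R) : 0 <= h -> 0 <= s -> 0 <= d ->
  cl h 0 s + d <= cl (h + d) 0 (s + d).
Proof. move=> *; rewrite /cl; splitmm; lra. Qed.
Lemma cl_mono {h h'} (a : R) {s t : R} : h <= h' -> s <= t -> cl h a s <= cl h' a t.
Proof. move=> *; rewrite /cl; splitmm; lra. Qed.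
Lemma cl_lip (h a s d : R) : 0 <= d -> cl (h + d) a (s + d) <= cl h a s + d.
Proof. move=> *; rewrite /cl; splitmm; lra. Qed.
Lemma cl_hlip (h h' a s : R) : h <= h' -> cl h' a s <= cl h a s + (h' - h).
Proof. move=> *; rewrite /cl; splitmm; lra. Qed.
Lemma cl_0 (a t : R) : 0 <= a -> 0 <= t -> cl 0 a t = a.
Proof. move=> *; rewrite /cl; splitmm; lra. Qed.
Lemma cl_t0 (h a : R) : cl h a 0 = a.
Proof. rewrite /cl; splitmm; lra. Qed.
Lemma cl_big (h a t : R) : 0 <= t -> a + t <= h -> cl h a t = a + t.
Proof. move=> *; rewrite /cl; splitmm; lra. Qed.
Lemma cl_ge (h a t : R) : a <= cl h a t.
Proof. rewrite /cl; splitmm; lra. Qed.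

Variables (N K : nat) (a : 'I_N -> R).
Hypothesis a_ge0 : forall l, 0 <= a l.
Hypothesis KN : (K <= N)%N.
Hypothesis Kzero : (K <= #|[set l | a l == 0%R]|)%N.

Definition base := \sum_l a l.
Definition F h t := \sum_l cl h (a l) t.
Definition St t : set R := [set h | 0 <= h /\ base + K%:R * t <= F h t].
Definition hh t := inf (St t).

Lemma F_mono (h h' s t : R) : h <= h' -> s <= t -> F h s <= F h' t.
Proof. by move=> *; apply: ler_sum => l _; apply: cl_mono. Qed.

Lemma F_hlip (h h' t : R) : h <= h' -> F h' t <= F h t + N%:R * (h' - h).
Proof.
move=> hh'; have <- : \sum_(l : 'I_N) (h' - h) = N%:R * (h' - h).
  by rewrite sumr_const card_ord mulr_natl.
rewrite /F -big_split /=; apply: ler_sum => l _; exact: cl_hlip.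
Qed.

Lemma F_0 (t : R) : 0 <= t -> F 0 t = base.
Proof. by move=> t0; apply: eq_bigr => l _; rewrite cl_0. Qed.

Lemma a_le_base l : a l <= base.
Proof.
rewrite /base (bigD1 l) //= lerDl; apply: sumr_ge0 => *; exact: a_ge0.
Qed.

Lemma St_ne (t : R) : 0 <= t -> St t (base + t).
Proof.
move=> t0; split; first by apply: addr_ge0 => //; apply: sumr_ge0 => *.
have -> : F (base + t) t = base + N%:R * t.
  rewrite /F (eq_bigr (fun l => a l + t)); last first.
    by move=> l _; rewrite cl_big // lerD2r a_le_base.
  by rewrite big_split /= sumr_const card_ord mulr_natl.
by rewrite lerD2l ler_wpM2r // ler_nat.
Qed.

Lemma hh_ge0 {t : R} : 0 <= t -> 0 <= hh t.
Proof. move=> t0; apply: infE_ge0; [by exists (base + t); exact: St_ne|by move=> u []]. Qed.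

Lemma hh_lb {t h : R} : 0 <= t -> St t h -> hh t <= h.
Proof. move=> t0 Sh; apply: infE_lb => //; [by exists h|by move=> u []]. Qed.

Lemma hh_eq {t : R} : 0 <= t -> F (hh t) t = base + K%:R * t.
Proof.
move=> t0; have Ne : exists u, St t u by exists (base + t); exact: St_ne.
have Ege : forall u, St t u -> 0 <= u by move=> u [].
have N0 : 0 < N%:R + 1 :> R by rewrite ltr_wpDl.
apply/eqP; rewrite eq_le; apply/andP; split.
  have [h0|hpos] := eqVneq (hh t) 0.
    by rewrite h0 F_0 // lerDl mulr_ge0.
  have hp : 0 < hh t by rewrite lt_def hpos hh_ge0.
  apply: (@le_eps R _ _ _ N0) => e e0.
  pose e' := Num.min e (hh t / 2).
  have e'0 : 0 < e' by rewrite /e' lt_min e0 divr_gt0.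
  have e'h : e' < hh t by rewrite /e' gt_min; apply/orP; right; lra.
  have nS : ~ St t (hh t - e').
    move=> S; have := @hh_lb t _ t0 S; lra.
  have lt1 : F (hh t - e') t < base + K%:R * t.
    rewrite ltNge; apply/negP => le1; apply: nS; split => //; lra.
  have hle : hh t - e' <= hh t by lra.
  have le2 := F_hlip _ _ t hle.
  have ee : e' <= e by rewrite /e' ge_min lexx.
  have : N%:R * (hh t - (hh t - e')) <= (N%:R + 1) * e.
    rewrite opprB addrC subrK; apply: ler_pM => //; [by rewrite ltW|lra].
  lra.
apply: (@le_eps R _ _ _ N0) => e e0.
have [u Su ult] := @infE_adh R (St t) Ne Ege e e0.
case: Su => u0 Su.
have hu : hh t <= u by apply: hh_lb.
have := F_hlip _ _ t hu.
have : N%:R * (u - hh t) <= (N%:R + 1) * e.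
  apply: ler_pM => //; [lra|lra|lra].
lra.
Qed.

Lemma hh_mono {s t : R} : 0 <= s -> s <= t -> hh s <= hh t.
Proof.
move=> s0 st; have t0 : 0 <= t by lra.
apply: hh_lb => //; split; first exact: hh_ge0.
have [t0'|tp] := eqVneq t 0.
  have s0' : s = 0 by lra.
  by rewrite s0' t0' hh_eq // lexx.
have tp' : 0 < t by rewrite lt_def tp.
have key : (t - s) * base + s * F (hh t) t <= t * F (hh t) s.
  rewrite /F /base mulr_sumr mulr_sumr mulr_sumr -big_split /=.
  apply: ler_sum => l _; apply: cl_conc => //; exact: hh_ge0.
rewrite hh_eq // in key.
rewrite -(ler_pM2l tp'); nra.
Qed.

Lemma hh_lip {s t : R} : 0 <= s -> s <= t -> hh t <= hh s + (t - s).
Proof.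
move=> s0 st; have t0 : 0 <= t by lra.
apply: hh_lb => //; split; first by have := hh_ge0 s0; lra.
set d := t - s; have d0 : 0 <= d by rewrite /d; lra.
have -> : t = s + d by rewrite /d; ring.
have step : \sum_l (cl (hh s) (a l) s + (if a l == 0 then d else 0))
            <= F (hh s + d) (s + d).
  apply: ler_sum => l _; case: eqP => [a0|_].
    by rewrite a0; apply: cl_shift => //; exact: hh_ge0.
  by rewrite addr0; apply: cl_mono; lra.
rewrite big_split /= -big_mkcond /= in step.
have cnt : \sum_(l | a l == 0) d = d *+ #|[set l | a l == 0%R]|.
  by rewrite -sumr_const; apply: eq_bigl => l; rewrite inE.
rewrite cnt -/(F _ _) hh_eq // in step.
have : d * K%:R <= d *+ #|[set l | a l == 0%R]|.
  by rewrite -[d *+ _]mulr_natr ler_wpM2l // ler_nat.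
lra.
Qed.

Definition gtraj (t : R) (l : 'I_N) := cl (hh t) (a l) t.

Lemma gtraj_traj (T : R) : 0 <= T -> wf_trajectory K N a T gtraj.
Proof.
move=> T0; split; first by move=> l; rewrite /gtraj cl_t0.
split.
  move=> s t l s0 st tT; apply/andP; split.
    by rewrite subr_ge0; apply: cl_mono => //; apply: hh_mono.
  rewrite lerBlDr addrC /gtraj.
  apply: (le_trans (cl_mono (a l) (hh_lip s0 st) (lexx t))).
  have dd : 0 <= t - s by lra.
  by have := cl_lip (hh s) (a l) s (t - s) dd; rewrite [s + _]addrC subrK.
split.
  move=> s t s0 st tT; rewrite sumrB -/(F _ _) -/(F _ _) !hh_eq //; [ring|lra].
move=> s t l m s0 st tT lt1 ltm.
have t0 : 0 <= t by lra.
move: (lt1 t st (lexx t)) ltm; rewrite /gtraj => ltlm ltm.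
have hbig : a l + t <= hh t.
  rewrite leNgt; apply/negP => hlt.
  move: ltlm ltm; rewrite /cl; move: (hh_mono s0 st).
  splitmm; lra.
rewrite cl_big // cl_big //; first ring.
have := hh_lip s0 st; lra.
Qed.
End T.

Section IVT.
Variables (R : realType) (T : R) (f : R -> R).
Hypothesis T0 : 0 <= T.
Hypothesis fmono : forall s t, 0 <= s -> s <= t -> t <= T -> f s <= f t.
Hypothesis flip : forall s t, 0 <= s -> s <= t -> t <= T -> f t - f s <= t - s.

Lemma ivt v : f 0 <= v -> v <= f T -> exists s, [/\ 0 <= s, s <= T & f s = v].
Proof.
move=> f0 fT.
pose E : set R := ([set u | 0 <= u /\ u <= T /\ v <= f u])%classic.
have Ene : exists u, E u by exists T.
have Ege : forall u, E u -> 0 <= u by move=> u [].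
set s := inf E.
have s0 : 0 <= s by apply: infE_ge0.
have sT : s <= T by apply: infE_lb => //; exists T.
have one : (0 : R) < 1 by [].
exists s; split => //; apply/eqP; rewrite eq_le; apply/andP; split.
  have [s00|sp] := eqVneq s 0; first by rewrite s00.
  have sp' : 0 < s by rewrite lt_def sp s0.
  apply: (@le_eps R _ _ _ one) => e e0.
  pose e' := Num.min e s.
  have e'0 : 0 < e' by rewrite /e' lt_min e0 sp'.
  have e'e : e' <= e by rewrite /e' ge_min lexx.
  have e's : e' <= s by rewrite /e' ge_min lexx orbT.
  have nE : ~ E (s - e') by move=> Eu; have := @infE_lb _ _ Ene Ege _ Eu; lra.
  have fu : f (s - e') < v.
    rewrite ltNge; apply/negP => vf; apply: nE; split; first lra; split => //; lra.
  have h1 : 0 <= s - e' by lra.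
  have h2 : s - e' <= s by lra.
  have := flip _ _ h1 h2 sT; lra.
apply: (@le_eps R _ _ _ one) => e e0.
have [u [u0 [uT vu]] ult] := @infE_adh _ _ Ene Ege _ e0.
have su : s <= u by apply: infE_lb => //.
have := flip _ _ s0 su uT; lra.
Qed.
End IVT.

Lemma small_delta (R : realType) (n : nat) (P : pred 'I_n) (f : 'I_n -> R) (r : R) :
  0 < r -> (forall q, P q -> 0 < f q) ->
  exists d, [/\ 0 < d, d <= r & forall q, P q -> d < f q].
Proof.
move=> r0 fpos.
suff [d [d0 dr H]] : exists d, [/\ 0 < d, d <= r & forall q, q \in enum 'I_n -> P q -> d < f q].
  by exists d; split => // q Pq; apply: H => //; rewrite mem_enum.
elim: (enum 'I_n) => [|q s [d [d0 dr H]]]; first by exists r; split.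
case Pq: (P q).
  have fq := fpos q Pq.
  exists (Num.min d (f q / 2)); split.
  - by rewrite lt_min d0 divr_gt0.
  - by rewrite ge_min dr.
  move=> q'; rewrite in_cons => /orP[/eqP ->|qs] Pq'.
    rewrite gt_min; apply/orP; right; lra.
  by rewrite gt_min H.
exists d; split => // q'; rewrite in_cons => /orP[/eqP ->|qs] Pq'; first by rewrite Pq in Pq'.
exact: H.
Qed.

Lemma card_ge (N K : nat) : (K <= N)%N -> #|[set q : 'I_N | (K <= q)%N]| = (N - K)%N.
Proof.
move=> KN; rewrite -sum1_card.
rewrite (eq_bigl (fun q : 'I_N => (K <= q)%N)); last by move=> q; rewrite inE.
rewrite -(big_mkord (fun q => (K <= q)%N) (fun _ => 1%N)).
rewrite (big_cat_nat (leq0n K) KN) /= big_nat_cond big1 ?add0n; last first.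
  by move=> i /andP[/andP[_ iK] Ki]; move: (leq_ltn_trans Ki iK); rewrite ltnn.
rewrite big_nat_cond (eq_bigl (fun i => (K <= i < N)%N && true)); last first.
  by move=> i; case: (K <= i < N)%N / andP => [[-> _]|] //; rewrite andbT.
by rewrite -big_nat_cond sum_nat_const_nat muln1.
Qed.

Section W2.
Variables (R : realType) (N K : nat) (a : 'I_N -> R) (T : R) (g : R -> 'I_N -> R).
Hypothesis tr : wf_trajectory K N a T g.
Hypothesis T0 : 0 <= T.

Lemma g0 l : g 0 l = a l. Proof. by case: tr => H _; apply: H. Qed.
Lemma g_mono s t l : 0 <= s -> s <= t -> t <= T -> g s l <= g t l.
Proof. by case: tr => _ [H _] s0 st tT; have /andP[] := H s t l s0 st tT; rewrite subr_ge0. Qed.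
Lemma g_lip s t l : 0 <= s -> s <= t -> t <= T -> g t l - g s l <= t - s.
Proof. by case: tr => _ [H _] s0 st tT; have /andP[] := H s t l s0 st tT. Qed.
Lemma g_sum s t : 0 <= s -> s <= t -> t <= T -> \sum_l (g t l - g s l) = K%:R * (t - s).
Proof. by case: tr => _ [_ [H _]]; apply: H. Qed.
Lemma g_iv s t l m : 0 <= s -> s <= t -> t <= T ->
  (forall u, s <= u -> u <= t -> g u l < g u m) ->
  g s m < g t m -> g t l - g s l = t - s.
Proof. by case: tr => _ [_ [_ H]]; apply: H. Qed.

Lemma stepA l : g T l - a l < T -> (K < #|[set q | (g T q <= g T l)%R]|)%N.
Proof.
move=> nfull.
pose E : set R := ([set u | 0 <= u /\ u <= T /\ g T l - g u l = T - u])%classic.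
have Ene : exists u, E u by exists T; split => //; split => //; rewrite !subrr.
have Ege : forall u, E u -> 0 <= u by move=> u [].
set r := inf E.
have r0 : 0 <= r by apply: (@infE_ge0 _ _ Ene Ege).
have rT : r <= T by apply: (@infE_lb _ _ Ene Ege); split => //; split => //; rewrite !subrr.
have one : (0 : R) < 1 by [].
have Er : E r.
  split => //; split => //; apply/eqP; rewrite eq_le; apply/andP; split.
    by apply: g_lip.
  rewrite lerBrDl; apply: (@le_eps R _ _ _ one) => e e0.
  have [u [u0 [uT Eu]] ult] := @infE_adh _ _ Ene Ege _ e0.
  have ru : r <= u by apply: (@infE_lb _ _ Ene Ege).
  rewrite -/r in ult; have := g_mono _ _ l r0 ru uT; lra.
have rpos : 0 < r.
  rewrite lt_def r0 andbT; apply/eqP => r00.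
  by case: Er => _ [_]; rewrite r00 g0 subr0 => H; move: nfull; rewrite H ltxx.
set c := g r l.
have hpos : forall q, c < g r q -> 0 < g r q - c by move=> q; rewrite subr_gt0.
have [d [d0 dr dH]] := @small_delta R N [pred q | c < g r q] (fun q => g r q - c) r rpos hpos.
set u0 := r - d.
have u00 : 0 <= u0 by rewrite /u0; lra.
have u0r : u0 <= r by rewrite /u0; lra.
have u0T : u0 <= T by lra.
have Erd : g T l - g r l = T - r by case: Er => _ [].
have notE : ~ E u0.
  move=> Eu; have := @infE_lb _ _ Ene Ege _ Eu; rewrite -/r /u0; lra.
have above : forall q, c < g r q -> g u0 q = g r q.
  move=> q cq; apply/eqP; rewrite eq_le g_mono //= leNgt; apply/negP => lt.
  have dq := dH q cq; have lq := g_lip _ _ q u00 u0r rT.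
  have strict : forall u, u0 <= u -> u <= r -> g u l < g u q.
    move=> u h1 h2; have := g_mono _ _ l (le_trans u00 h1) h2 rT.
    have := g_mono _ _ q u00 h1 (le_trans h2 rT); rewrite /= in dq.
    rewrite -/c /u0 in lq *; lra.
  have Hiv := g_iv _ _ _ _ u00 u0r rT strict lt.
  apply: notE; split => //; split => //; rewrite /u0 in Hiv *; lra.
have ll : g r l - g u0 l < d.
  rewrite lt_neqAle; apply/andP; split.
    apply/negP => /eqP Hd; apply: notE; split => //; split => //; rewrite /u0 in Hd *; lra.
  by have := g_lip _ _ l u00 u0r rT; rewrite /u0; lra.
have sum := g_sum _ _ u00 u0r rT.
rewrite (bigID [pred q | c < g r q]) /= big1 ?add0r in sum; last first.
  by move=> q cq; rewrite above // subrr.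
have pos : 0 < \sum_(q | ~~ (c < g r q)) (d - (g r q - g u0 q)).
  rewrite (bigD1 l) /=; last by rewrite -/c ltxx.
  apply: ltr_pwDl; first lra.
  apply: sumr_ge0 => q _; have := g_lip _ _ q u00 u0r rT; rewrite /u0; lra.
rewrite sumrB sum sumr_const in pos.
have cardE : #|[pred q | ~~ (c < g r q)]| = #|[set q | (g r q <= c)%R]|.
  by apply: eq_card => q; rewrite !inE leNgt.
rewrite cardE in pos.
have Kd : (K < #|[set q | (g r q <= c)%R]|)%N.
  rewrite -(ltr_nat R) -(ltr_pM2r d0) mulr_natl mulr_natl.
  have e1 : K%:R * (r - u0) = d *+ K by rewrite /u0 mulr_natl; congr (_ *+ _); ring.
  by rewrite e1 in pos; rewrite -subr_gt0.
apply: (leq_trans Kd); apply: subset_leq_card; apply/fintype.subsetP => q; rewrite !inE => hq.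
have := g_lip _ _ q r0 rT (lexx T); rewrite -/c in hq Erd *; lra.
Qed.

Lemma stepB m v s : 0 <= s -> s <= T -> g s m = v -> v < g T m ->
  (#|[set q | (g T q < v)%R]| < K)%N.
Proof.
move=> s0 sT gs vT.
have full : forall q, g T q < v -> g T q - g s q = T - s.
  move=> q qv; have lt : g s m < g T m by rewrite gs.
  apply: (g_iv _ _ _ _ s0 sT (lexx T) _ lt).
  move=> u h1 h2; have := g_mono _ _ q (le_trans s0 h1) h2 (lexx T).
  have := g_mono _ _ m s0 h1 h2; lra.
have sum := g_sum _ _ s0 sT (lexx T).
rewrite (bigID [pred q | g T q < v]) /= in sum.
rewrite (eq_bigr (fun _ => T - s)) in sum; last by move=> q; exact: full.
rewrite sumr_const in sum.
have cardE : #|[pred q | g T q < v]| = #|[set q | (g T q < v)%R]|.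
  by apply: eq_card => q; rewrite !inE.
rewrite cardE in sum.
have rest : g T m - v <= \sum_(q | ~~ (g T q < v)) (g T q - g s q).
  rewrite (bigD1 m) /=; last by rewrite -leNgt ltW.
  rewrite gs lerDl; apply: sumr_ge0 => q _; rewrite subr_ge0; exact: g_mono.
have lipm := g_lip _ _ m s0 sT (lexx T); rewrite gs in lipm.
have Ts : 0 < T - s by lra.
rewrite -(ltr_nat R) -(ltr_pM2r Ts) mulr_natl mulr_natl.
have : (T - s) *+ #|[set q | (g T q < v)%R]| < K%:R * (T - s) by lra.
by rewrite mulr_natl.
Qed.

Variable mu : R.
Hypothesis a_ge0 : forall l, 0 <= a l.
Hypothesis a_le : forall l, a l <= mu.
Hypothesis a_par : forall l : 'I_N, (K <= l)%N -> a l = 0.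
Hypothesis KNK : (K <= N - K)%N.
Hypothesis region : \sum_l a l + K%:R * T <= N%:R * mu.

Lemma all_le_mu m : g T m <= mu.
Proof.
rewrite leNgt; apply/negP => hm.
set v := (mu + g T m) / 2.
have muv : mu < v by rewrite /v; lra.
have vm : v < g T m by rewrite /v; lra.
have g0v : g 0 m <= v by rewrite g0; have := a_le m; lra.
have [s [s0 sT gs]] := @ivt R T (fun u => g u m) T0
  (fun s t => g_lip s t m) v g0v (ltW vm).
have Lw := stepB _ _ _ s0 sT gs vm.
have KN : (K <= N)%N by apply: (leq_trans KNK); exact: leq_subr.
case: (ltP T v) => [Tv|vT].
  have : (#|[set q : 'I_N | (K <= q)%N]| <= #|[set q | (g T q < v)%R]|)%N.
    apply: subset_leq_card; apply/fintype.subsetP => q; rewrite !inE => Kq.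
    have := g_lip _ _ q (lexx 0) T0 (lexx T); rewrite g0 a_par //; lra.
  rewrite card_ge // => H; have := leq_ltn_trans KNK (leq_ltn_trans H Lw); by rewrite ltnn.
case: (boolP [exists q, g T q < mu]) => [/existsP[q hq]|/existsPn hall].
  have nf : g T q - a q < T by have := a_ge0 q; lra.
  have HA := stepA _ nf.
  have : (#|[set q' | (g T q' <= g T q)%R]| <= #|[set q | (g T q < v)%R]|)%N.
    apply: subset_leq_card; apply/fintype.subsetP => q'; rewrite !inE => hq'; lra.
  move=> H; have := ltn_trans (leq_trans HA H) Lw; by rewrite ltnn.
have sum := g_sum _ _ (lexx 0) T0 (lexx T).
rewrite sumrB (eq_bigr a (fun l _ => g0 l)) in sum.
have big : N%:R * mu < \sum_l g T l.
  have -> : N%:R * mu = \sum_(l : 'I_N) mu by rewrite sumr_const card_ord mulr_natl.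
  rewrite -subr_gt0 -sumrB (bigD1 m) //=; apply: ltr_pwDl; first lra.
  apply: sumr_ge0 => l _; have := hall l; rewrite -leNgt subr_ge0 //.
move: sum region big. rewrite subr0. move=> *. lra.
Qed.
End W2.

Lemma reidx (R : realType) N (F : {set 'I_N} -> R) (Q : pred {set 'I_N}) (p : 'I_N) :
  (forall S : {set 'I_N}, p \in S -> F S = 0) ->
  \sum_(S | Q S) (if p \in S then F (S :\ p) else 0) = \sum_(S | Q (p |: S)) F S.
Proof.
move=> F0.
rewrite -big_mkcondr /=.
rewrite (reindex_onto (fun S => p |: S) (fun S => S :\ p)) /=; last first.
  by move=> S /andP[_ pS]; rewrite setD1K.
rewrite [RHS](bigID (fun S : {set 'I_N} => p \in S)) /=; rewrite [X in _ = X + _]big1 ?add0r; last first.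
  by move=> S /andP[_]; apply: F0.
apply: eq_big => S; last by move=> /andP[_ /eqP ->].
rewrite setU11 andbT; congr (_ && _).
case pS: (p \in S) => /=; last by rewrite setU1K ?pS // eqxx.
apply/negbTE/eqP => H; have : p \in (p |: S) :\ p by rewrite H.
by rewrite !inE eqxx.
Qed.

Lemma exists_max (R : realType) N (y : 'I_N -> R) (l0 : 'I_N) :
  exists p, forall q, y q <= y p.
Proof.
suff [p Hp] : exists p, forall q, q \in enum 'I_N -> y q <= y p.
  by exists p => q; apply: Hp; rewrite mem_enum.
elim: (enum 'I_N) => [|q s [p Hp]]; first by exists l0.
case: (leP (y q) (y p)) => h.
  by exists p => q'; rewrite in_cons => /orP[/eqP->|/Hp].
exists q => q'; rewrite in_cons => /orP[/eqP->|/Hp H] //.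
exact: le_trans H (ltW h).
Qed.

Definition dspec (R : realType) (N K : nat) (c : R) (y : 'I_N -> R) (A : {set 'I_N})
  (w : {set 'I_N} -> R) :=
  [/\ forall S : {set 'I_N}, 0 <= w S,
      forall S : {set 'I_N}, w S != 0 -> (#|S| == K) && (S \subset A),
      forall l : 'I_N, \sum_(S : {set 'I_N} | l \in S) w S = y l
    & \sum_(S : {set 'I_N}) w S = c].
Arguments dspec {R N}.

Lemma dzero (R : realType) (N K : nat) (c : R) (y : 'I_N -> R) (A : {set 'I_N}) :
  0 <= c -> (forall l, y l = 0) -> (K = 0%N \/ c = 0) -> exists w, dspec K c y A w.
Proof.
move=> c0 y0 Kc; exists (fun S => if S == set0 then c else 0); split.
- by move=> S; case: ifP.
- move=> S; case: ifP => [/eqP -> cn0|]; last by rewrite eqxx.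
  case: Kc => [->|c00]; last by move: cn0; rewrite c00 eqxx.
  by rewrite cards0 eqxx sub0set.
- move=> l; rewrite y0 big1 // => S lS; case: ifP => // /eqP S0.
  by move: lS; rewrite S0 inE.
- by rewrite (bigD1 set0) //= eqxx big1 ?addr0 // => S /negbTE ->.
Qed.

Lemma sum_neq (R : realType) N (p : 'I_N) (f : 'I_N -> R) :
  \sum_l (if l == p then 0 else f l) = \sum_(l | l != p) f l.
Proof. by rewrite (bigD1 p) //= eqxx add0r; apply: eq_bigr => l /negbTE ->. Qed.

Lemma decomp (R : realType) (N n : nat) : forall (K : nat) (c : R) (y : 'I_N -> R)
  (A : {set 'I_N}), (#|A| <= n)%N -> 0 <= c -> (forall l, 0 <= y l) ->
  (forall l, y l <= c) -> (forall l, l \notin A -> y l = 0) ->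
  \sum_l y l = K%:R * c -> exists w, dspec K c y A w.
Proof.
elim: n => [|n IH] K c y A An c0 y0 yc yA ysum.
  have yz : forall l, y l = 0.
    move=> l; apply: yA; apply/negP => lA.
    by move: An; rewrite leqn0 cards_eq0 => /eqP A0; move: lA; rewrite A0 inE.
  case: (posnP K) => [K0|Kp]; first by apply: dzero => //; left.
  apply: dzero => //; right.
  move: ysum; rewrite big1 // => /esym/eqP; rewrite mulf_eq0 pnatr_eq0.
  by case/orP => /eqP // K0; rewrite K0 in Kp.
case: (posnP K) => [K0|Kp].
  apply: dzero => //; last by left.
  move: ysum; rewrite K0 mul0r => /eqP; rewrite psumr_eq0 // => /allP H l.
  by apply/eqP; apply: (implyP (H l (mem_index_enum l))).
have [c00|cp] := eqVneq c 0.
  by apply: dzero => //; [move=> l; have := y0 l; have := yc l; lra|right].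
have cp' : 0 < c by rewrite lt_def cp c0.
have [l0 l0p] : exists l, 0 < y l.
  case: (boolP [exists l, 0 < y l]) => [/existsP //|/existsPn H].
  have : \sum_l y l <= 0 by apply: sumr_le0 => l _; rewrite leNgt H.
  by rewrite ysum leNgt mulr_gt0 // ltr0n.
have [p pmax] := @exists_max R N y l0.
have ypp : 0 < y p by apply: lt_le_trans l0p (pmax l0).
have pA : p \in A by apply/negPn/negP => pnA; have := yA _ pnA; lra.
set d := c - y p.
have d0 : 0 <= d by rewrite /d; have := yc p; lra.
pose Lo l := Num.max 0 (y l - d).
set L := \sum_(l | l != p) Lo l.
set H := \sum_(l | l != p) y l.
have HE : H = K%:R * c - y p.
  have : \sum_l y l = y p + H by rewrite (bigD1 p).
  rewrite ysum; lra.
have K1 : (K.-1)%:R = K%:R - 1 :> R by rewrite -[in RHS](prednK Kp) -natr1 addrK.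
set tau := (K.-1)%:R * y p.
have tauH : tau <= H.
  rewrite /tau HE K1; have := yc p; have : 1 <= K%:R :> R by rewrite ler1n.
  nra.
have Lo0 : forall l, 0 <= Lo l by move=> l; rewrite /Lo le_max lexx.
have Loy : forall l, Lo l <= y l by move=> l; rewrite /Lo ge_max y0 /=; lra.
have Lod : forall l, y l - d <= Lo l by move=> l; rewrite /Lo le_max lexx orbT.
set J := [set l | (l != p) && (d < y l)].
have LE : L = \sum_(l in J) (y l - d).
  rewrite /L (bigID (fun l => d < y l)) /= [X in _ + X]big1 ?addr0; last first.
    by move=> l /andP[_]; rewrite -leNgt /Lo => hl; apply/max_idPl; lra.
  apply: eq_big => [l|l /andP[_ hl]]; first by rewrite inE.
  by rewrite /Lo; apply/max_idPr; lra.
have L1 : L <= y p *+ #|J|.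
  rewrite LE -sumr_const; apply: ler_sum => l _; have := yc l; rewrite /d; lra.
have L2 : L <= H - d *+ #|J|.
  have HJ : H = \sum_(l in J) y l + \sum_(l | (l != p) && ~~ (d < y l)) y l.
    rewrite /H (bigID (fun l => d < y l)) /=; congr (_ + _).
    by apply: eq_bigl => l; rewrite inE.
  rewrite LE sumrB sumr_const lerD2r HJ lerDl.
  by apply: sumr_ge0 => l _.
have Ltau : L <= tau.
  rewrite /tau; case: (ltnP #|J| K) => hJ.
    have : (#|J|%:R <= (K.-1)%:R :> R) by rewrite ler_nat -ltnS prednK.
    by rewrite -mulr_natr in L1; move=> h; apply: (le_trans L1); rewrite mulrC ler_wpM2r // ltW.
  have : (K%:R <= #|J|%:R :> R) by rewrite ler_nat.
  rewrite -mulr_natr in L2; rewrite K1 HE in L2 * => h.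
  have : d * K%:R <= d * #|J|%:R by rewrite ler_wpM2l.
  rewrite /d in L2 *; nra.
have LH : L <= H by lra.
pose th := if H == L then 0 else (tau - L) / (H - L).
have th0 : 0 <= th.
  rewrite /th; case: eqP => // HL; apply: divr_ge0; lra.
have th1 : th <= 1.
  rewrite /th; case: eqP => // HL; rewrite ler_pdivrMr; lra.
have thE : L + th * (H - L) = tau.
  rewrite /th; case: eqP => [HL|HL]; first by lra.
  by rewrite divfK; [ring|apply/eqP; lra].
pose u l := if l == p then 0 else Lo l + th * (y l - Lo l).
pose v l := if l == p then 0 else y l - u l.
have ulo : forall l, l != p -> Lo l <= u l /\ u l <= y l.
  move=> l /negbTE lp; rewrite /u lp; have := Lo0 l; have := Loy l; nra.
have u0 : forall l, 0 <= u l.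
  move=> l; case: (eqVneq l p) => [->|lp]; first by rewrite /u eqxx.
  by have [h _] := ulo l lp; apply: le_trans h.
have uyp : forall l, u l <= y p.
  move=> l; case: (eqVneq l p) => [->|lp]; first by rewrite /u eqxx; lra.
  by have [_ h] := ulo l lp; apply: le_trans h _.
have v0 : forall l, 0 <= v l.
  move=> l; rewrite /v; case: eqP => [//|/eqP lp]; have [_ h] := ulo l lp; lra.
have vd : forall l, v l <= d.
  move=> l; rewrite /v; case: eqP => [//|/eqP lp]; have [h _] := ulo l lp.
  have := Lod l; lra.
have An' : (#|A :\ p| <= n)%N.
  by move: An; rewrite (cardsD1 p A) pA.
have uA : forall l, l \notin A :\ p -> u l = 0.
  move=> l; rewrite !inE negb_and negbK => /orP[/eqP->|lA]; first by rewrite /u eqxx.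
  have yl := yA l lA; have [h1 h2] : Lo l <= u l /\ u l <= y l.
    by apply: ulo; apply/eqP => lp; move: lA; rewrite lp pA.
  have := Lo0 l; lra.
have vA : forall l, l \notin A :\ p -> v l = 0.
  move=> l lA; rewrite /v (uA l lA); case: eqP => // lp.
  move: lA; rewrite !inE negb_and negbK => /orP[/eqP lp'|lA]; first by case: lp.
  by rewrite subr0; apply: yA.
have usum : \sum_l u l = (K.-1)%:R * y p.
  rewrite sum_neq -/tau -thE /L /H big_split /= -mulr_sumr sumrB.
  by [].
have vsum : \sum_l v l = K%:R * d.
  rewrite /v sum_neq sumrB -/H.
  have -> : \sum_(i | i != p) u i = \sum_i u i.
    have up : u p = 0 by rewrite /u eqxx.
    by rewrite [RHS](bigD1 p) //= up add0r.
  rewrite usum HE K1 /d; ring.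
have [wu [wu0 wuS wul wut]] := IH _ _ u _ An' (ltW ypp) u0 uyp uA usum.
have [wv [wv0 wvS wvl wvt]] := IH _ _ v _ An' d0 v0 vd vA vsum.
have wu0' : forall S : {set 'I_N}, p \in S -> wu S = 0.
  move=> S pS; case: (eqVneq (wu S) 0) => // /wuS /andP[_ sub].
  by move: (fintype.subsetP sub p pS); rewrite !inE eqxx.
have wv0' : forall S : {set 'I_N}, p \in S -> wv S = 0.
  move=> S pS; case: (eqVneq (wv S) 0) => // /wvS /andP[_ sub].
  by move: (fintype.subsetP sub p pS); rewrite !inE eqxx.
exists (fun S => wv S + (if p \in S then wu (S :\ p) else 0)); split.
- by move=> S; apply: addr_ge0 => //; case: ifP.
- move=> S; case pS: (p \in S).
    rewrite wv0' // add0r => /wuS /andP[/eqP cS sub]; apply/andP; split.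
      by rewrite (cardsD1 p S) pS cS add1n prednK.
    apply/fintype.subsetP => q qS; case: (eqVneq q p) => [->//|qp].
    have : q \in S :\ p by rewrite !inE qp.
    by move/(fintype.subsetP sub); rewrite !inE => /andP[_ ->].
  rewrite addr0 => /wvS /andP[-> sub] /=.
  by apply: (subset_trans sub); apply: subD1set.
- move=> l; rewrite big_split /= (@reidx R N wu (fun S => l \in S) p wu0').
  case: (eqVneq l p) => [->|lp].
    rewrite big1; last by move=> S; apply: wv0'.
    have E : \sum_(S : {set 'I_N} | p \in p |: S) wu S = \sum_(S : {set 'I_N}) wu S.
      by apply: eq_bigl => S; rewrite setU11.
    by rewrite E wut add0r.
  have E : \sum_(S : {set 'I_N} | l \in p |: S) wu S = \sum_(S : {set 'I_N} | l \in S) wu S.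
    by apply: eq_bigl => S; rewrite in_setU1 (negbTE lp).
  by rewrite wvl E wul /v (negbTE lp); ring.
- rewrite big_split /= wvt (@reidx R N wu (fun _ => true) p wu0') wut /d; ring.
Qed.

Section Init.
Variables (R : realType) (K N : nat) (mu : R) (lam : 'I_K -> R).
Hypothesis KN : (K <= N)%N.
Hypothesis mu0 : 0 < mu.
Hypothesis lam0 : forall i, 0 <= lam i.

Definition nodeof (i : 'I_K) : 'I_N := widen_ord KN i.

Lemma a_node l i : val l = val i -> wf_init K N mu lam l = Num.min (lam i) mu.
Proof.
move=> li; rewrite /wf_init (big_pred1 i) // => j /=.
by rewrite li; apply/eqP/eqP => [/val_inj|->].
Qed.

Lemma a_par l : (K <= val l)%N -> wf_init K N mu lam l = 0.
Proof.
move=> Kl; rewrite /wf_init big_pred0 // => j; apply/negbTE/eqP => jl.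
by move: (ltn_ord j); rewrite jl ltnNge Kl.
Qed.

Lemma min_ge0 i : 0 <= Num.min (lam i) mu.
Proof. by rewrite le_min lam0 ltW. Qed.
Lemma min_le i : Num.min (lam i) mu <= mu.
Proof. by rewrite ge_min lexx orbT. Qed.

Lemma a_cases l : (exists2 i, val l = val i & wf_init K N mu lam l = Num.min (lam i) mu)
  \/ wf_init K N mu lam l = 0.
Proof.
case: (ltnP (val l) K) => lK; last by right; apply: a_par.
by left; exists (Ordinal lK) => //; apply: a_node.
Qed.

Lemma a_ge0 l : 0 <= wf_init K N mu lam l.
Proof. by case: (a_cases l) => [[i _ ->]|->]; [apply: min_ge0|]. Qed.
Lemma a_le l : wf_init K N mu lam l <= mu.
Proof. by case: (a_cases l) => [[i _ ->]|->]; [apply: min_le|apply: ltW]. Qed.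

Lemma sum_a : \sum_l wf_init K N mu lam l = \sum_i Num.min (lam i) mu.
Proof.
rewrite /wf_init (exchange_big_dep xpredT) //=; apply: eq_bigr => i _.
rewrite (big_pred1 (nodeof i)) // => l /=.
Qed.
End Init.



Theorem theorem2 (R : realType) (K N : nat) (mu : R) (lam : 'I_K -> R) :
  (1 <= K)%N -> (K <= N - K)%N -> 0 < mu -> (forall i, 0 <= lam i) ->
  (wf_serves K N mu lam <-> in_region K N mu lam) /\
  (in_capacity_region K N mu lam <-> in_region K N mu lam).
Proof.
move=> K1 KNK mu0 lam0.
have KN : (K <= N)%N by apply: (leq_trans KNK); exact: leq_subr.
set a := wf_init K N mu lam.
set T := wf_coded K mu lam.
have aG : forall l, 0 <= a l by move=> l; apply: a_ge0.
have aL : forall l, a l <= mu by move=> l; apply: a_le.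
have aP : forall l : 'I_N, (K <= l)%N -> a l = 0 by move=> l; apply: a_par.
have sa : \sum_l a l = \sum_i Num.min (lam i) mu by apply: sum_a.
have posp0 : forall x : R, 0 <= posp x by move=> x; rewrite /posp le_max lexx.
have T0 : 0 <= T by apply: sumr_ge0 => i _.
have regE : in_region K N mu lam <-> \sum_l a l + K%:R * T <= N%:R * mu.
  by rewrite /in_region big_split /= -mulr_sumr -sa.
have Kzero : (K <= #|[set l | a l == 0%R]|)%N.
  apply: (leq_trans KNK); rewrite -card_ge //; apply: subset_leq_card.
  by apply/fintype.subsetP => l; rewrite !inE => /aP ->.
split.
  rewrite regE; split.
    case=> [[g tr] all]; case: (tr) => g0 [_ [gs _]].
    have := gs 0 T (lexx 0) T0 (lexx T).
    rewrite sumrB (eq_bigr a (fun l _ => g0 l)) subr0 => sE.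
    have : \sum_l g T l <= N%:R * mu.
      rewrite -[N in N%:R]card_ord mulr_natl -sumr_const; apply: ler_sum => l _.
      exact: all tr l.
    lra.
  move=> reg; split; first by exists (gtraj R N K a); apply: gtraj_traj.
  by move=> g tr l; apply: (@all_le_mu R N K a T g tr T0 mu aG aL aP KNK reg l).
have S0rec : forall i : 'I_K, recovering K N i [set j : 'I_N | val j == val i].
  by move=> i; rewrite /recovering eqxx.
have S0card : forall i : 'I_K, #|[set j : 'I_N | val j == val i]| = 1%N.
  move=> i; have -> : [set j : 'I_N | val j == val i] = [set widen_ord KN i].
    apply/finset.setP => j.
    by rewrite !inE; apply/eqP/eqP => [h|->//]; apply: val_inj.
  by rewrite cards1.
have recK : forall (i : 'I_K) S, recovering K N i S ->
    S != [set j : 'I_N | val j == val i] -> #|S| = K.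
  by move=> i S; rewrite /recovering => /orP[/eqP->|/andP[/eqP -> _]]; rewrite ?eqxx.
split.
  case=> x [x0 [xsum xload]]; rewrite /in_region.
  have tot : \sum_(l : 'I_N) \sum_(i < K)
      \sum_(S | recovering K N i S && (l \in S)) x i S <= N%:R * mu.
    rewrite -[N in N%:R]card_ord mulr_natl -sumr_const; apply: ler_sum => l _.
    exact: xload.
  have ex : \sum_(l : 'I_N) \sum_(i < K)
      \sum_(S | recovering K N i S && (l \in S)) x i S =
      \sum_(i < K) \sum_(S | recovering K N i S) x i S *+ #|S|.
    rewrite exchange_big; apply: eq_bigr => i _.
    under eq_bigr do rewrite big_mkcondr.
    rewrite exchange_big; apply: eq_bigr => S _.
    by rewrite -big_mkcond /= sumr_const.
  rewrite ex in tot; apply: (le_trans _ tot); apply: ler_sum => i _.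
  set S0 := [set j : 'I_N | val j == val i].
  rewrite (bigD1 S0) //= S0card.
  rewrite (eq_bigr (fun S => x i S *+ K)); last first.
    by move=> S /andP[rS nS]; rewrite (recK i S rS nS).
  rewrite sumrMnl.
  have xs := xsum i; rewrite (bigD1 S0) //= in xs.
  set rest := \sum_(S | recovering K N i S && (S != S0)) x i S in xs *.
  have rest0 : 0 <= rest by apply: sumr_ge0.
  have xmu : x i S0 <= mu.
    apply: le_trans (xload (widen_ord KN i)).
    rewrite (bigD1 i) //= (bigD1 S0) /=; last by apply/andP; split; [exact: S0rec|rewrite /S0 inE].
    rewrite -addrA lerDl; apply: addr_ge0; apply: sumr_ge0 => *; [exact: x0|].
    by apply: sumr_ge0.
  have x00 := x0 i S0.
  have Kr : 1 <= K%:R :> R by rewrite ler1n.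
  rewrite mulr1n -[rest *+ K]mulr_natr /posp; splitmm; nra.
rewrite regE => reg.
set C := T.
pose e i := posp (lam i - mu).
have e0 : forall i, 0 <= e i by move=> i; apply: posp0.
have eC : forall i, e i <= C.
  by move=> i; rewrite /C /T /wf_coded (bigD1 i) //= lerDl; apply: sumr_ge0.
have me : forall i, Num.min (lam i) mu + e i = lam i.
  by move=> i; rewrite /e /posp; splitmm; lra.
pose cap l := Num.min C (mu - a l).
have cap0 : forall l, 0 <= cap l.
  by move=> l; rewrite /cap le_min T0 /=; have := aL l; lra.
have capC : forall l, cap l <= C by move=> l; rewrite /cap ge_min lexx.
have capr : forall l, cap l <= mu - a l by move=> l; rewrite /cap ge_min lexx orbT.
have capsum : K%:R * C <= \sum_l cap l.
  case: (leP C mu) => hC.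
    rewrite (bigID (fun l : 'I_N => (K <= l)%N)) /=.
    have h2 : 0 <= \sum_(l : 'I_N | ~~ (K <= l)%N) cap l by apply: sumr_ge0.
    suff : K%:R * C <= \sum_(l : 'I_N | (K <= l)%N) cap l by lra.
    rewrite (eq_bigr (fun _ => C)); last first.
      by move=> l Kl; rewrite /cap aP // subr0; apply/min_idPl.
    rewrite sumr_const.
    have -> : #|[pred l : 'I_N | (K <= l)%N]| = (N - K)%N.
      by rewrite -card_ge //; apply: eq_card => l; rewrite !inE.
    by rewrite -[C *+ _]mulr_natl ler_wpM2r // ler_nat.
  rewrite (eq_bigr (fun l => mu - a l)); last first.
    by move=> l _; rewrite /cap; apply/min_idPr; have := aG l; lra.
  rewrite sumrB sumr_const card_ord -[mu *+ N]mulr_natl; rewrite -/C in reg; lra.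
set Sc := \sum_l cap l.
pose th := if Sc == 0 then 0 else K%:R * C / Sc.
have th0 : 0 <= th.
  by rewrite /th; case: eqP => // _; apply: divr_ge0; [apply: mulr_ge0|apply: sumr_ge0].
have th1 : th <= 1.
  rewrite /th; case: eqP => // /eqP Sc0.
  have Scp : 0 < Sc by rewrite lt_def Sc0 sumr_ge0.
  by rewrite ler_pdivrMr // mul1r.
pose y l := th * cap l.
have y0 : forall l, 0 <= y l by move=> l; apply: mulr_ge0.
have ycap : forall l, y l <= cap l.
  by move=> l; rewrite /y; have := cap0 l; nra.
have yC : forall l, y l <= C by move=> l; apply: le_trans (ycap l) (capC l).
have ysum : \sum_l y l = K%:R * C.
  rewrite /y -mulr_sumr -/Sc /th; case: eqP => [Sc0|/eqP Sc0].
    move: capsum; rewrite -/Sc Sc0 => h.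
    have : K%:R * C == 0 by rewrite eq_le h mulr_ge0.
    by rewrite mul0r => /eqP ->.
  by rewrite divfK.
set A := [set l | y l != 0].
have yA : forall l, l \notin A -> y l = 0 by move=> l; rewrite inE negbK => /eqP.
have An : (#|A| <= N)%N by have := max_card A; rewrite card_ord.
have [w [w0 wS wl wt]] := @decomp R N N K C y A An T0 y0 yC yA ysum.
pose S0 (i : 'I_K) := [set j : 'I_N | val j == val i].
pose x (i : 'I_K) S := (if S == S0 i then Num.min (lam i) mu else 0) + e i / C * w S.
have sat : forall i, 0 < e i -> forall S, w S != 0 -> recovering K N i S.
  move=> i ei S /wS /andP[cS sub]; rewrite /recovering cS /=; apply/orP; right.
  apply/forall_inP => j jS; apply/negP => /eqP ji.
  have := fintype.subsetP sub j jS; rewrite inE => /negP; apply.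
  have aj : a j = mu.
    rewrite /a (@a_node R K N mu lam j i ji); apply/min_idPr; move: ei; rewrite /e /posp.
    by splitmm; lra.
  apply/eqP; rewrite /y /cap aj subrr; have -> : Num.min C 0 = 0 by apply/min_idPr.
  by rewrite mulr0.
have eterm : forall i (P : pred {set 'I_N}) (V : R),
    (0 < e i -> \sum_(S | P S) w S = V) -> e i / C * \sum_(S | P S) w S = e i / C * V.
  move=> i P V h; have := e0 i; rewrite le_eqVlt => /orP[/eqP <-|ep]; first by rewrite !mul0r.
  by rewrite h.
exists x; split.
  move=> i S; apply: addr_ge0; first by case: ifP => _ //; apply: min_ge0.
  by apply: mulr_ge0 => //; apply: divr_ge0.
split.
  move=> i; rewrite big_split /= (bigD1 (S0 i)) //= eqxx big1 ?addr0; last first.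
    by move=> S /andP[_ /negbTE ->].
  rewrite -mulr_sumr (eterm i _ C); last first.
    move=> ep; rewrite -wt [RHS](bigID (recovering K N i)) /= [X in _ = _ + X]big1 ?addr0 //.
    by move=> S nr; apply/eqP; apply/negPn/negP => /(sat i ep S); rewrite (negbTE nr).
  have := e0 i; rewrite le_eqVlt => /orP[/eqP e00|ep].
    by rewrite -e00 !mul0r addr0 -[RHS](me i) -e00 addr0.
  rewrite divfK; first exact: me.
  by apply/eqP => C0; have := eC i; rewrite C0; lra.
move=> l.
have per : forall i, \sum_(S | recovering K N i S && (l \in S)) x i S =
    (if val i == val l then Num.min (lam i) mu else 0) + e i / C * y l.
  move=> i; rewrite big_split /= -mulr_sumr (eterm i _ (y l)); last first.
    move=> ep; rewrite -wl [RHS](bigID (recovering K N i)) /= [X in _ = _ + X]big1 ?addr0.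
      by apply: eq_bigl => S; rewrite andbC.
    by move=> S /andP[_ nr]; apply/eqP; apply/negPn/negP => /(sat i ep S); rewrite (negbTE nr).
  congr (_ + _); case: (eqVneq (val i) (val l)) => [il|il].
    rewrite (bigD1 (S0 i)) /=; last by apply/andP; split; [exact: S0rec|rewrite /S0 inE il].
    by rewrite eqxx big1 ?addr0 // => S /andP[_ /negbTE ->].
  apply: big1 => S /andP[_ lS]; case: eqP => // SS; move: lS; rewrite SS /S0 inE eq_sym.
  by rewrite (negbTE il).
rewrite (eq_bigr _ (fun i _ => per i)) big_split /=.
have -> : \sum_i (if val i == val l then Num.min (lam i) mu else 0) = a l.
  by rewrite /a /wf_init [RHS]big_mkcond.
have -> : \sum_i e i / C * y l = y l.
  rewrite -mulr_suml -mulr_suml.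
  have [C0|Cn0] := eqVneq C 0.
    have yl : y l = 0 by have := y0 l; have := yC l; rewrite C0; lra.
    by rewrite yl mulr0.
  by have -> : \sum_i e i = C by []; rewrite divff // mul1r.
have := ycap l; have := capr l; lra.
Qed.
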